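(* Let $m\ge 2$ be an integer, let $\alpha_0\in(0,\tfrac{\pi}{2})$ and put $b=\tfrac12\tan\alpha_0>0$, so that $\arg(\tfrac12+bi)=\alpha_0$ and $\arg(\tfrac12-bi)=-\alpha_0$. Let $$S^m_{\alpha_0}=\Big\{z\in\mathbb{C}^m:\ \text{for each }k,\ z_k=0\text{ or }|\arg z_k|\le\alpha_0,\ \ \sum_{k=1}^m z_k=1\Big\}.$$ Then $S^m_{\alpha_0}$ is convex, and its set of extreme points consists of exactly $m^2$ points, namely: (i) the $m$ standard basis vectors $e^1,\dots,e^m$ of $\mathbb{C}^m$, and (ii) the $m(m-1)$ vectors $\eta$ having exactly two nonzero coordinates, one of them equal to $\tfrac12+bi$ and another equal to $\tfrac12-bi$ (one such vector for each ordered pair $(k,l)$ of distinct indices, with $\eta_k=\tfrac12+bi$, $\eta_l=\tfrac12-bi$, and all other coordinates $0$).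
   Context: $\arg$ denotes the principal argument with values in $(-\pi,\pi]$. A point $a$ of a set $S\subseteq\mathbb{C}^m$ is an extreme point if there are no $p,q\in S$ with $p\neq q$ and $\lambda\in(0,1)$ such that $a=\lambda p+(1-\lambda)q$. *)

(* Defs.v *)
From HB Require Import structures.
From mathcomp Require Import all_boot all_order all_algebra.
From mathcomp Require Import complex.
From mathcomp Require Import all_classical all_reals all_analysis.
Set Implicit Arguments. Unset Strict Implicit. Unset Printing Implicit Defensive.
Import Order.TTheory GRing.Theory Num.Theory.
Local Open Scope ring_scope.
Local Open Scope classical_set_scope.

Definition is_principal_arg (R : realType) (z : R[i]) (t : R) : Prop :=
  [/\ - pi < t, t <= pi,
      complex.Re z = ComplexField.Normc.normc z * cos t & complex.Im z = ComplexField.Normc.normc z * sin t].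

(* The principal argument arg z (meaningful for z <> 0; unique there). *)
Definition parg (R : realType) (z : R[i]) : R :=
  xget 0 [set t | is_principal_arg z t].

Definition cvx_comb (R : realType) (m : nat) (l : R) (p q : 'rV[R[i]]_m)
  : 'rV[R[i]]_m := (l%:C)%C *: p + ((1 - l)%:C)%C *: q.

Definition convex_setC (R : realType) (m : nat) (S : set 'rV[R[i]]_m) : Prop :=
  forall p q (l : R), S p -> S q -> 0 <= l <= 1 -> S (cvx_comb l p q).

Definition extreme_point (R : realType) (m : nat) (S : set 'rV[R[i]]_m)
  (a : 'rV[R[i]]_m) : Prop :=
  S a /\ ~ (exists p q (l : R), [/\ S p, S q, p <> q, 0 < l < 1 &
                                     a = cvx_comb l p q]).

Definition S_alpha (R : realType) (m : nat) (a0 : R) : set 'rV[R[i]]_m :=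
  [set z | (forall k, z 0 k = 0 \/ `|parg (z 0 k)| <= a0) /\
           \sum_(k < m) z 0 k = 1].

Definition std_e (R : realType) (m : nat) (k : 'I_m) : 'rV[R[i]]_m :=
  \row_j (if j == k then 1 else 0).

Definition eta_vec (R : realType) (m : nat) (b : R) (k l : 'I_m)
  : 'rV[R[i]]_m :=
  \row_j (if j == k then (2^-1 +i* b)%C
          else if j == l then (2^-1 -i* b)%C else 0).

Arguments S_alpha {R} m a0.
Arguments std_e {R m} k.
Arguments eta_vec {R m} b k l.

(* Main.v *)
Require Import Defs.
From HB Require Import structures.
From mathcomp Require Import all_boot all_order all_algebra.
From mathcomp Require Import complex.
From mathcomp Require Import all_classical all_reals all_analysis.
From mathcomp Require Import ring lra.
Import Order.TTheory GRing.Theory Num.Theory.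
Local Open Scope ring_scope.
Local Open Scope classical_set_scope.
Set Implicit Arguments. Unset Strict Implicit. Unset Printing Implicit Defensive.

Lemma ReD (R : realType) (x y : R[i]) : complex.Re (x + y) = complex.Re x + complex.Re y.
Proof. by case: x; case: y. Qed.
Lemma ImD (R : realType) (x y : R[i]) : complex.Im (x + y) = complex.Im x + complex.Im y.
Proof. by case: x; case: y. Qed.
Lemma ReM (R : realType) (l : R) (x : R[i]) : complex.Re ((l%:C)%C * x) = l * complex.Re x.
Proof. case: x => a b /=. ring. Qed.
Lemma ImM (R : realType) (l : R) (x : R[i]) : complex.Im ((l%:C)%C * x) = l * complex.Im x.
Proof. case: x => a b /=. ring. Qed.
Lemma ReS (R : realType) m (f : 'I_m -> R[i]) :
  complex.Re (\sum_(k < m) f k) = \sum_(k<m) complex.Re (f k).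
Proof. exact: (big_morph _ (@ReD R) (erefl _)). Qed.
Lemma ImS (R : realType) m (f : 'I_m -> R[i]) :
  complex.Im (\sum_(k < m) f k) = \sum_(k<m) complex.Im (f k).
Proof. exact: (big_morph _ (@ImD R) (erefl _)). Qed.
Lemma cplx_eq (R : realType) (x y : R[i]) :
  complex.Re x = complex.Re y -> complex.Im x = complex.Im y -> x = y.
Proof. by case: x; case: y => /= ? ? ? ? -> ->. Qed.

Definition Uf (R : realType) (T : R) (z : R[i]) := T * complex.Re z + complex.Im z.
Definition Vf (R : realType) (T : R) (z : R[i]) := T * complex.Re z - complex.Im z.
Definition SC (R : realType) m (T : R) : set 'rV[R[i]]_m :=
  [set z | (forall k, 0 <= Uf T (z 0 k) /\ 0 <= Vf T (z 0 k)) /\ \sum_(k<m) z 0 k = 1].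
Arguments SC {R} m T.

Lemma eqUV (R : realType) (T : R) (x y : R[i]) : T != 0 ->
  Uf T x = Uf T y -> Vf T x = Vf T y -> x = y.
Proof.
rewrite /Uf /Vf => T0 hU hV.
have h1 : T * complex.Re x = T * complex.Re y by lra.
apply: cplx_eq; first exact: (mulfI T0 h1).
lra.
Qed.

Lemma sumU (R : realType) m (T : R) (z : 'rV[R[i]]_m) :
  \sum_(k<m) Uf T (z 0 k) = T * complex.Re (\sum_(k<m) z 0 k) + complex.Im (\sum_(k<m) z 0 k).
Proof. by rewrite /Uf big_split /= -mulr_sumr ReS ImS. Qed.
Lemma sumV (R : realType) m (T : R) (z : 'rV[R[i]]_m) :
  \sum_(k<m) Vf T (z 0 k) = T * complex.Re (\sum_(k<m) z 0 k) - complex.Im (\sum_(k<m) z 0 k).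
Proof. by rewrite /Vf big_split /= -mulr_sumr ReS ImS sumrN. Qed.

Lemma sumUV (R : realType) m (T : R) (z : 'rV[R[i]]_m) : T != 0 ->
  (\sum_(k<m) z 0 k = 1) <-> (\sum_(k<m) Uf T (z 0 k) = T /\ \sum_(k<m) Vf T (z 0 k) = T).
Proof.
move=> T0; rewrite sumU sumV; split.
  by move=> ->; rewrite /= mulr1; split; lra.
move=> [h1 h2]; apply: cplx_eq => /=.
  have h : T * complex.Re (\sum_(k<m) z 0 k) = T * 1 by lra.
  exact: (mulfI T0 h).
lra.
Qed.

Lemma cvxU (R : realType) m (T l : R) (p q : 'rV[R[i]]_m) i :
  Uf T ((cvx_comb l p q) 0 i) = l * Uf T (p 0 i) + (1 - l) * Uf T (q 0 i).
Proof. rewrite /cvx_comb /Uf !mxE ReD ImD !ReM !ImM. ring. Qed.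
Lemma cvxV (R : realType) m (T l : R) (p q : 'rV[R[i]]_m) i :
  Vf T ((cvx_comb l p q) 0 i) = l * Vf T (p 0 i) + (1 - l) * Vf T (q 0 i).
Proof. rewrite /cvx_comb /Vf !mxE ReD ImD !ReM !ImM. ring. Qed.

Lemma sum_delta (R : realType) m (k : 'I_m) (c : R) :
  \sum_(i < m) (if i == k then c else 0) = c.
Proof. by rewrite -big_mkcond big_pred1_eq. Qed.
Lemma normc_ge0 (R : realType) (z : R[i]) : 0 <= ComplexField.Normc.normc z.
Proof. case: z => a b /=. exact: sqrtr_ge0. Qed.
Lemma normc_sq (R : realType) (z : R[i]) :
  ComplexField.Normc.normc z ^+ 2 = complex.Re z ^+ 2 + complex.Im z ^+ 2.
Proof. case: z => a b /=. rewrite sqr_sqrtr //. by rewrite addr_ge0 // sqr_ge0. Qed.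
Lemma normc_gt0 (R : realType) (z : R[i]) : z != 0 -> 0 < ComplexField.Normc.normc z.
Proof.
move=> z0; rewrite lt_neqAle normc_ge0 andbT eq_sym.
apply/negP => /eqP /ComplexField.Normc.eq0_normc; exact/eqP.
Qed.

Lemma exists_parg (R : realType) (z : R[i]) : z != 0 -> exists t, is_principal_arg z t.
Proof.
move=> z0; set n := ComplexField.Normc.normc z.
have n0 : 0 < n by exact: normc_gt0.
set c := complex.Re z / n; set s := complex.Im z / n.
have hcs : c ^+ 2 + s ^+ 2 = 1.
  rewrite /c /s !expr_div_n -mulrDl -normc_sq divff //.
  by rewrite expf_neq0 // gt_eqF.
have hc : -1 <= c <= 1.
  have h : c ^+ 2 <= 1 by rewrite -hcs lerDl sqr_ge0.
  apply/andP; split; nra.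
have hs2 : 1 - c ^+ 2 = s ^+ 2 by lra.
have hRe : complex.Re z = n * c by rewrite /c mulrC divfK // gt_eqF.
have hIm : complex.Im z = n * s by rewrite /s mulrC divfK // gt_eqF.
have pi0 : 0 < pi :> R by exact: pi_gt0.
case: (leP 0 s) => s0.
  exists (acos c); split.
  - have := acos_ge0 hc; lra.
  - exact: acos_lepi.
  - by rewrite acosK // in_itv.
  - by rewrite sin_acos // hs2 sqrtr_sqr ger0_norm.
exists (- acos c); split.
- have cN1 : c != -1.
    apply/eqP => hc1; have : s ^+ 2 = 0 by rewrite -hs2 hc1; ring.
    move/eqP; rewrite sqrf_eq0 => /eqP s00; lra.
  rewrite ltrN2; apply: acos_ltpi; case/andP: hc => h1 ->; rewrite andbT.
  by rewrite lt_neqAle h1 andbT eq_sym.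
- have := acos_ge0 hc; lra.
- by rewrite cosN acosK // in_itv.
- by rewrite sinN sin_acos // hs2 sqrtr_sqr ltr0_norm // opprK.
Qed.

Lemma abs_lt_pihalf (R : realType) (t : R) : - pi < t <= pi -> 0 < cos t -> `|t| < pi / 2.
Proof.
move=> /andP[h1 h2] hc.
have pi0 : 0 < pi :> R by exact: pi_gt0.
have ht : `|t| <= pi by rewrite ler_norml h2 andbT ltW.
rewrite -(@ltr_cos R `|t| (pi / 2)) ?in_itv /= ?normr_ge0 ?ht //.
  by rewrite cos_pihalf cos_norm.
apply/andP; split; first by apply: divr_ge0; [exact: ltW|].
lra.
Qed.

Lemma sin_norm (R : realType) (t : R) : `|t| <= pi -> sin `|t| = `|sin t|.
Proof.
move=> ht; case: (leP 0 t) => t0.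
  rewrite ger0_norm // ger0_norm //; apply: sin_ge0_pi.
  by rewrite t0 -(ger0_norm t0) ht.
rewrite ltr0_norm // -[in RHS]normrN -sinN ger0_norm //; apply: sin_ge0_pi.
rewrite -(ltr0_norm t0) ht andbT; exact: normr_ge0.
Qed.

Lemma key_arg (R : realType) (a0 t : R) : 0 < a0 < pi / 2 -> `|t| < pi / 2 ->
  (`|t| <= a0) = (`|sin t| <= tan a0 * cos t).
Proof.
move=> /andP[a1 a2] ht.
have ct : 0 < cos t by apply: cos_gt0_pihalf; rewrite -ltr_norml.
have pi0 : 0 < pi :> R by exact: pi_gt0.
have e : (`|t| <= a0) = (tan `|t| <= tan a0).
  rewrite !leNgt ltr_tan // in_itv /=; apply/andP; split => //; try lra.
  have := normr_ge0 t; lra.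
rewrite e /tan cos_norm sin_norm; last by lra.
by rewrite ler_pdivrMr.
Qed.

Lemma cone_iff (R : realType) (a0 : R) (z : R[i]) : 0 < a0 < pi / 2 ->
  (z = 0 \/ `|parg z| <= a0) <-> (0 <= Uf (tan a0) z /\ 0 <= Vf (tan a0) z).
Proof.
move=> ha; have /andP[a1 a2] := ha.
have pi0 : 0 < pi :> R by exact: pi_gt0.
have T0 : 0 < tan a0.
  rewrite /tan divr_gt0 //; first by apply: sin_gt0_pihalf; rewrite a1 a2.
  by apply: cos_gt0_pihalf; rewrite a2 andbT; lra.
have [->|z0] := eqVneq z 0.
  by rewrite /Uf /Vf /= mulr0 addr0 subr0; split => // _; left.
have [t Pt] := exists_parg z0.
have := xgetPex 0 (ex_intro _ t Pt); rewrite -/(parg z).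
set p := parg z; case => h1 h2 hRe hIm.
set n := ComplexField.Normc.normc z in hRe hIm.
have n0 : 0 < n by exact: normc_gt0.
have hp : - pi < p <= pi by rewrite h1 h2.
split.
  case => [/eqP|]; first by rewrite (negbTE z0).
  move=> hpa.
  have hp2 : `|p| < pi / 2 by lra.
  have := hpa; rewrite key_arg // ler_norml => /andP[s1 s2].
  rewrite /Uf /Vf hRe hIm.
  have e1 : tan a0 * (n * cos p) + n * sin p = n * (tan a0 * cos p + sin p) by ring.
  have e2 : tan a0 * (n * cos p) - n * sin p = n * (tan a0 * cos p - sin p) by ring.
  rewrite e1 e2; split; apply: mulr_ge0; lra.
rewrite /Uf /Vf => -[hU hV]; right.
have hr : 0 <= complex.Re z.
  have : 0 <= tan a0 * complex.Re z by lra.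
  by rewrite pmulr_rge0.
have hr0 : 0 < complex.Re z.
  rewrite lt_neqAle hr andbT eq_sym; apply/eqP => r0.
  move/eqP: z0; apply; apply: cplx_eq => //=.
  rewrite r0 mulr0 in hU hV; lra.
have ct : 0 < cos p by move: hr0; rewrite hRe pmulr_rgt0.
have hp2 := abs_lt_pihalf hp ct.
rewrite key_arg //.
have hI : `|complex.Im z| <= tan a0 * complex.Re z by rewrite ler_norml; lra.
move: hI; rewrite hIm hRe normrM (gtr0_norm n0) mulrCA ler_pM2l //.
Qed.

Definition pt (R : realType) m (T : R) (u v : 'I_m -> R) : 'rV[R[i]]_m :=
  \row_i (((u i + v i) / (2 * T)) +i* ((u i - v i) / 2))%C.
Arguments pt {R m} T u v.

Lemma Upt (R : realType) m (T : R) u v (i : 'I_m) : T != 0 -> Uf T (pt T u v 0 i) = u i.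
Proof. move=> T0; rewrite mxE /Uf /=; field; exact: T0. Qed.
Lemma Vpt (R : realType) m (T : R) u v (i : 'I_m) : T != 0 -> Vf T (pt T u v 0 i) = v i.
Proof. move=> T0; rewrite mxE /Vf /=; field; exact: T0. Qed.

Lemma rv_eqUV (R : realType) m (T : R) (a b : 'rV[R[i]]_m) : T != 0 ->
  (forall i, Uf T (a 0 i) = Uf T (b 0 i) /\ Vf T (a 0 i) = Vf T (b 0 i)) -> a = b.
Proof. move=> T0 h; apply/rowP => i; have [h1 h2] := h i; exact: eqUV h1 h2. Qed.

Lemma SC_convex (R : realType) m (T : R) : 0 < T -> convex_setC (SC m T).
Proof.
move=> T0 p q l [hp sp] [hq sq] /andP[l0 l1]; have T0' : T != 0 by rewrite gt_eqF.
split.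
  move=> k; rewrite cvxU cvxV; have [p1 p2] := hp k; have [q1 q2] := hq k.
  have l1' : 0 <= 1 - l by lra.
  split; apply: addr_ge0; apply: mulr_ge0 => //.
apply/(sumUV _ T0'); move/(sumUV _ T0'): sp => [sp1 sp2]; move/(sumUV _ T0'): sq => [sq1 sq2].
under eq_bigr do rewrite cvxU; under [X in _ /\ X = _]eq_bigr do rewrite cvxV.
rewrite !big_split /= -!mulr_sumr sp1 sp2 sq1 sq2; split; ring.
Qed.

Definition Vert (R : realType) m (T : R) (a : 'rV[R[i]]_m) :=
  exists k l, forall i, Uf T (a 0 i) = (if i == k then T else 0) /\
                        Vf T (a 0 i) = (if i == l then T else 0).
Arguments Vert {R m} T a.

Lemma pin (R : realType) m (f g h : 'I_m -> R) (k : 'I_m) (c l : R) : 0 < l < 1 ->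
  (forall i, 0 <= g i) -> (forall i, 0 <= h i) -> \sum_(i < m) g i = c -> \sum_(i < m) h i = c ->
  (forall i, f i = l * g i + (1 - l) * h i) -> (forall i, f i = if i == k then c else 0) ->
  forall i, g i = f i /\ h i = f i.
Proof.
move=> /andP[l0 l1] g0 h0 sg sh fe fk.
have z : forall i, i != k -> g i = 0 /\ h i = 0.
  move=> i ik; have := fe i; rewrite fk (negbTE ik) => e.
  have a1 : 0 <= l * g i by apply: mulr_ge0 => //; exact: ltW.
  have a2 : 0 <= (1 - l) * h i by apply: mulr_ge0 => //; lra.
  have b1 : l * g i = 0 by lra.
  have b2 : (1 - l) * h i = 0 by lra.
  move/eqP: b1; rewrite mulf_eq0 gt_eqF //= => /eqP ->.
  move/eqP: b2; rewrite mulf_eq0 subr_eq0 eq_sym (lt_eqF l1) /= => /eqP -> //.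
move=> i; rewrite fk; case: (eqVneq i k) => [->|ik]; last exact: z.
split.
  by rewrite -sg (bigD1 k) //= big1 ?addr0 // => j jk; have [] := z j jk.
by rewrite -sh (bigD1 k) //= big1 ?addr0 // => j jk; have [] := z j jk.
Qed.

Lemma vert_SC (R : realType) m (T : R) a : 0 < T -> Vert T a -> SC m T a.
Proof.
move=> T0 [k [l h]]; split.
  move=> i; have [-> ->] := h i; split; case: ifP => _ //; exact: ltW.
have T0' : T != 0 by rewrite gt_eqF.
apply/(sumUV _ T0'); split.
  by rewrite (eq_bigr (fun i => if i == k then T else 0)) ?sum_delta // => i _; rewrite (proj1 (h i)).
by rewrite (eq_bigr (fun i => if i == l then T else 0)) ?sum_delta // => i _; rewrite (proj2 (h i)).
Qed.

Lemma vert_extreme (R : realType) m (T : R) a : 0 < T -> Vert T a -> extreme_point (SC m T) a.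
Proof.
move=> T0 hv; have T0' : T != 0 by rewrite gt_eqF.
split; first exact: vert_SC.
case: hv => k [l h] [p [q [l' [[hp sp] [hq sq] pq hl ea]]]].
move/(sumUV _ T0'): sp => [sp1 sp2]; move/(sumUV _ T0'): sq => [sq1 sq2].
have eU : forall i, Uf T (a 0 i) = l' * Uf T (p 0 i) + (1 - l') * Uf T (q 0 i).
  by move=> i; rewrite ea cvxU.
have eV : forall i, Vf T (a 0 i) = l' * Vf T (p 0 i) + (1 - l') * Vf T (q 0 i).
  by move=> i; rewrite ea cvxV.
have hU := @pin R m (fun i => Uf T (a 0 i)) (fun i => Uf T (p 0 i)) (fun i => Uf T (q 0 i)) k T l' hl
  (fun i => proj1 (hp i)) (fun i => proj1 (hq i)) sp1 sq1 eU (fun i => proj1 (h i)).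
have hV := @pin R m (fun i => Vf T (a 0 i)) (fun i => Vf T (p 0 i)) (fun i => Vf T (q 0 i)) l T l' hl
  (fun i => proj2 (hp i)) (fun i => proj2 (hq i)) sp2 sq2 eV (fun i => proj2 (h i)).
have ep : p = a.
  apply: (rv_eqUV T0') => i; have [h1 _] := hU i; have [h2 _] := hV i; by split.
have eq : q = a.
  apply: (rv_eqUV T0') => i; have [_ h1] := hU i; have [_ h2] := hV i; by split.
by apply: pq; rewrite ep eq.
Qed.

Lemma perturb (R : realType) m (T : R) (w : 'I_m -> R) (j k : 'I_m) : j != k ->
  0 < w j -> 0 < w k -> (forall i, 0 <= w i) -> \sum_(i < m) w i = T ->
  exists w1 w2 : 'I_m -> R, [/\ forall i, 0 <= w1 i /\ 0 <= w2 i,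
    \sum_(i < m) w1 i = T, \sum_(i < m) w2 i = T, w1 j != w2 j &
    forall i, w i = 2^-1 * w1 i + (1 - 2^-1) * w2 i].
Proof.
move=> jk wj wk w0 sw.
set e := Num.min (w j) (w k).
have e0 : 0 < e by rewrite lt_min wj wk.
have ej : e <= w j by rewrite ge_min lexx.
have ek : e <= w k by rewrite ge_min lexx orbT.
pose d i := (if i == j then e else 0) - (if i == k then e else 0).
have sd : \sum_(i < m) d i = 0 by rewrite /d sumrB !sum_delta subrr.
exists (fun i => w i + d i), (fun i => w i - d i); split.
- move=> i; rewrite /d; case: (eqVneq i j) => [->|ij].
    rewrite (negbTE jk) subr0; have := w0 j; split; lra.
  case: (eqVneq i k) => [->|ik]; first by split; lra.
  by rewrite subrr addr0 subr0; split.
- by rewrite big_split /= sw sd addr0.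
- by rewrite sumrB sw sd subr0.
- rewrite /d eqxx (negbTE jk); apply/eqP; lra.
- move=> i; lra.
Qed.

Lemma single (R : realType) m (T : R) (w : 'I_m -> R) : T != 0 -> \sum_(i < m) w i = T ->
  (forall j k, j != k -> w j = 0 \/ w k = 0) -> exists k, forall i, w i = if i == k then T else 0.
Proof.
move=> T0 sw hw.
case: (pselect (exists k, w k != 0)) => [[k wk]|nk]; last first.
  exfalso; move/eqP: T0; apply; rewrite -sw big1 // => i _.
  case: (eqVneq (w i) 0) => // hi; exfalso; apply: nk; by exists i.
have z : forall i, i != k -> w i = 0.
  move=> i ik; case: (hw i k ik) => // wk0; by rewrite wk0 eqxx in wk.
exists k => i; case: (eqVneq i k) => [->|ik]; last exact: z.
by rewrite -sw (bigD1 k) //= big1 ?addr0 // => j jk; apply: z.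
Qed.

Lemma extreme_vert (R : realType) m (T : R) a : 0 < T -> extreme_point (SC m T) a -> Vert T a.
Proof.
move=> T0 [[ha sa] nd]; have T0' : T != 0 by rewrite gt_eqF.
move/(sumUV _ T0'): sa => [su sv].
have key : forall (w1 w2 v1 v2 : 'I_m -> R) j,
    (forall i, 0 <= w1 i /\ 0 <= w2 i) -> (forall i, 0 <= v1 i /\ 0 <= v2 i) ->
    \sum_(i < m) w1 i = T -> \sum_(i < m) w2 i = T ->
    \sum_(i < m) v1 i = T -> \sum_(i < m) v2 i = T ->
    (w1 j != w2 j \/ v1 j != v2 j) ->
    (forall i, Uf T (a 0 i) = 2^-1 * w1 i + (1 - 2^-1) * w2 i) ->
    (forall i, Vf T (a 0 i) = 2^-1 * v1 i + (1 - 2^-1) * v2 i) -> False.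
  move=> w1 w2 v1 v2 j hw hv sw1 sw2 sv1 sv2 hj eu ev.
  have mem : forall x y : 'I_m -> R, (forall i, 0 <= x i /\ 0 <= y i) ->
      \sum_(i < m) x i = T -> \sum_(i < m) y i = T -> SC m T (pt T x y).
    move=> x y hxy sx sy; split.
      by move=> i; rewrite Upt // Vpt //; exact: hxy.
    apply/(sumUV _ T0'); split.
      by rewrite (eq_bigr (fun i => x i)) // => i _; rewrite Upt.
    by rewrite (eq_bigr (fun i => y i)) // => i _; rewrite Vpt.
  apply: nd; exists (pt T w1 v1), (pt T w2 v2), 2^-1; split.
  - apply: mem => // i; have [? _] := hw i; have [? _] := hv i; by split.
  - apply: mem => // i; have [_ ?] := hw i; have [_ ?] := hv i; by split.
  - move=> e; case: hj => /eqP; apply.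
      by have := congr1 (fun x : 'rV[R[i]]_m => Uf T (x 0 j)) e; rewrite /= !Upt.
    by have := congr1 (fun x : 'rV[R[i]]_m => Vf T (x 0 j)) e; rewrite /= !Vpt.
  - apply/andP; split; lra.
  - apply: (rv_eqUV T0') => i; rewrite cvxU cvxV !Upt // !Vpt //; exact: (conj (eu i) (ev i)).
have hu : forall j k, j != k -> Uf T (a 0 j) = 0 \/ Uf T (a 0 k) = 0.
  move=> j k jk; case: (eqVneq (Uf T (a 0 j)) 0) => [|uj]; [by left|right].
  case: (eqVneq (Uf T (a 0 k)) 0) => // uk; exfalso.
  have uj' : 0 < Uf T (a 0 j) by rewrite lt_neqAle eq_sym uj (proj1 (ha j)).
  have uk' : 0 < Uf T (a 0 k) by rewrite lt_neqAle eq_sym uk (proj1 (ha k)).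
  have [w1 [w2 [hw s1 s2 wj hw']]] := perturb jk uj' uk' (fun i => proj1 (ha i)) su.
  apply: (key w1 w2 (fun i => Vf T (a 0 i)) (fun i => Vf T (a 0 i)) j) => //.
  - by move=> i; have := proj2 (ha i); split.
  - by left.
  - move=> i /=; lra.
have hv : forall j k, j != k -> Vf T (a 0 j) = 0 \/ Vf T (a 0 k) = 0.
  move=> j k jk; case: (eqVneq (Vf T (a 0 j)) 0) => [|uj]; [by left|right].
  case: (eqVneq (Vf T (a 0 k)) 0) => // uk; exfalso.
  have uj' : 0 < Vf T (a 0 j) by rewrite lt_neqAle eq_sym uj (proj2 (ha j)).
  have uk' : 0 < Vf T (a 0 k) by rewrite lt_neqAle eq_sym uk (proj2 (ha k)).
  have [w1 [w2 [hw s1 s2 wj hw']]] := perturb jk uj' uk' (fun i => proj2 (ha i)) sv.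
  apply: (key (fun i => Uf T (a 0 i)) (fun i => Uf T (a 0 i)) w1 w2 j) => //.
  - by move=> i; have := proj1 (ha i); split.
  - by right.
  - move=> i /=; lra.
have [k hk] := single T0' su hu.
have [l hl] := single T0' sv hv.
by exists k, l => i; rewrite hk hl.
Qed.

Lemma std_eUV (R : realType) m (T : R) (k i : 'I_m) :
  Uf T ((std_e k : 'rV[R[i]]_m) 0 i) = (if i == k then T else 0) /\
  Vf T ((std_e k : 'rV[R[i]]_m) 0 i) = (if i == k then T else 0).
Proof. rewrite /std_e mxE /Uf /Vf; case: (i == k) => /=; split; ring. Qed.

Lemma etaUV (R : realType) m (T : R) (k l i : 'I_m) : k != l ->
  Uf T ((eta_vec (T / 2) k l : 'rV[R[i]]_m) 0 i) = (if i == k then T else 0) /\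
  Vf T ((eta_vec (T / 2) k l : 'rV[R[i]]_m) 0 i) = (if i == l then T else 0).
Proof.
move=> kl; rewrite /eta_vec mxE /Uf /Vf.
case hik: (i == k) => /=.
  have -> : (i == l) = false by move/eqP: hik => ->; exact: negbTE kl.
  by split; field.
by case: (i == l) => /=; split; field.
Qed.

Lemma vert_E (R : realType) m (T : R) (a : 'rV[R[i]]_m) : 0 < T ->
  Vert T a <-> ((exists k, a = std_e k) \/ (exists k l, k != l /\ a = eta_vec (T / 2) k l)).
Proof.
move=> T0; have T0' : T != 0 by rewrite gt_eqF.
split.
  case=> k [l h]; case: (boolP (k == l)) => [/eqP ekl|kl]; first subst l.
    left; exists k; apply: (rv_eqUV T0') => i.
    by have [-> ->] := h i; have [-> ->] := std_eUV T k i.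
  right; exists k, l; split => //; apply: (rv_eqUV T0') => i.
  by have [-> ->] := h i; have [-> ->] := etaUV T i kl.
case=> [[k ->]|[k [l [kl ->]]]].
  by exists k, k => i; exact: std_eUV.
by exists k, l => i; exact: etaUV.
Qed.

Definition Fv (R : realType) m (T : R) (x : 'I_m * 'I_m) : 'rV[R[i]]_m :=
  pt T (fun i => if i == x.1 then T else 0) (fun i => if i == x.2 then T else 0).

Lemma vert_image (R : realType) m (T : R) : 0 < T ->
  [set a : 'rV[R[i]]_m | Vert T a] = (Fv T) @` setT.
Proof.
move=> T0; have T0' : T != 0 by rewrite gt_eqF.
apply/seteqP; split => a /=.
  case=> k [l h]; exists (k, l) => //; apply: (rv_eqUV T0') => i.
  by rewrite /Fv Upt // Vpt //; have [-> ->] := h i.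
case=> x _ <-; exists x.1, x.2 => i; by rewrite /Fv Upt // Vpt.
Qed.

Lemma Fv_inj (R : realType) m (T : R) : 0 < T -> injective (@Fv R m T).
Proof.
move=> T0; have T0' : T != 0 by rewrite gt_eqF.
move=> [x1 x2] [y1 y2] e.
have := congr1 (fun z : 'rV[R[i]]_m => Uf T (z 0 x1)) e.
have := congr1 (fun z : 'rV[R[i]]_m => Vf T (z 0 x2)) e.
rewrite /Fv /= !Upt // !Vpt // !eqxx => h2 h1.
have e1 : x1 = y1.
  by case: (boolP (x1 == y1)) h1 => [/eqP //|_] /eqP; rewrite (negbTE T0').
have e2 : x2 = y2.
  by case: (boolP (x2 == y2)) h2 => [/eqP //|_] /eqP; rewrite (negbTE T0').
by rewrite e1 e2.
Qed.

Lemma card_prodI m : ([set: 'I_m * 'I_m] #= `I_(m ^ 2)%N)%card.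
Proof.
have e : #|{: 'I_m * 'I_m}| = (m ^ 2)%N by rewrite card_prod card_ord mulnn.
rewrite -e.
apply: (@card_eq_trans _ _ _ _ [set: 'I_#|{: 'I_m * 'I_m}|]); last first.
  by rewrite card_eq_sym; exact: card_II.
have -> : [set: 'I_#|{: 'I_m * 'I_m}|] = enum_rank @` [set: 'I_m * 'I_m].
  apply/seteqP; split => // i _; exists (enum_val i) => //; exact: enum_valK.
rewrite card_eq_sym; apply: inj_card_eq; apply: in2W; exact: enum_rank_inj.
Qed.


Lemma tan_gt0' (R : realType) (a0 : R) : 0 < a0 < pi / 2 -> 0 < tan a0.
Proof.
move=> /andP[a1 a2]; have pi0 : 0 < pi :> R by exact: pi_gt0.
rewrite /tan divr_gt0 //; first by apply: sin_gt0_pihalf; rewrite a1 a2.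
by apply: cos_gt0_pihalf; rewrite a2 andbT; lra.
Qed.

Unset Implicit Arguments.
Theorem theorem3p1 (R : realType) (m : nat) (a0 : R) :
  (2 <= m)%N -> 0 < a0 < pi / 2 ->
  let b := tan a0 / 2 in
  convex_setC (S_alpha m a0) /\
  [set a | extreme_point (S_alpha m a0) a] =
    [set a | (exists k : 'I_m, a = std_e k) \/
             (exists k l : 'I_m, k != l /\ a = eta_vec b k l)] /\
  ([set a | extreme_point (S_alpha m a0) a] #= `I_((m ^ 2)%N))%card.
Proof.
move=> _ ha b; rewrite /b.
have T0 := tan_gt0' ha.
have ES : S_alpha m a0 = SC m (tan a0).
  apply/seteqP; split => z [h1 h2]; split => // k.
    exact/(cone_iff _ ha)/h1.
  exact/(cone_iff _ ha)/h1.
rewrite ES.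
have EE : [set a | extreme_point (SC m (tan a0)) a] = [set a | Vert (tan a0) a].
  apply/seteqP; split => a /=; [exact: extreme_vert | exact: vert_extreme].
split; first exact: SC_convex.
rewrite EE; split.
  by apply/seteqP; split => a /=; rewrite vert_E.
rewrite vert_image //.
apply: (card_eq_trans _ (card_prodI m)).
apply: inj_card_eq; apply: in2W; exact: Fv_inj.
Qed.
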